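(* For every NBA $\mathcal A$, the relation $P(\subseteq^{\mathrm{bw\text{-}di}},\sqsubset^{\mathrm{di}})$ is good for pruning, i.e. $\mathcal L(\mathrm{Prune}(\mathcal A,P(\subseteq^{\mathrm{bw\text{-}di}},\sqsubset^{\mathrm{di}})))=\mathcal L(\mathcal A)$.
   Context: An NBA is $\mathcal A=(\Sigma,Q,I,F,\delta)$, $\delta\subseteq Q\times\Sigma\times Q$, assumed forward and backward complete; initial traces start in $I$, fair traces are infinite and visit $F$ infinitely often; the language is the set of infinite words with an initial fair trace. Direct simulation $\sqsubseteq^{\mathrm{di}}$: in the game from $(p_0,q_0)$, at round $i$ from $(p_i,q_i)$ Spoiler picks $p_i\xrightarrow{\sigma_i}p_{i+1}$ and Duplicator answers $q_i\xrightarrow{\sigma_i}q_{i+1}$; Duplicator wins the infinite play if $p_i\in F\Rightarrow q_i\in F$ for all $i$; $p\sqsubseteq^{\mathrm{di}}q$ iff Duplicator has a winning strategy from $(p,q)$; $\sqsubset^{\mathrm{di}}$ is its strict part. Backward direct trace inclusion: $p\subseteq^{\mathrm{bw\text{-}di}}q$ iff for every finite word $\sigma_0\cdots\sigma_{m-1}$ and every initial finite trace $p_0\xrightarrow{\sigma_0}\cdots\xrightarrow{\sigma_{m-1}}p_m=p$ there is an initial finite trace $q_0\xrightarrow{\sigma_0}\cdots\xrightarrow{\sigma_{m-1}}q_m=q$ with $p_i\in F\Rightarrow q_i\in F$ for $0\le i\le m$. $\mathrm{Prune}(\mathcal A,P)$ has transition set $\{t\in\delta:\nexists t'\in\delta,(t,t')\in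 P\}$; $P(R_b,R_f)=\{((p,\sigma,r),(p',\sigma,r'))\in\delta\times\delta:p\,R_b\,p',\ r\,R_f\,r'\}$. *)

(* Defs.v *)
From mathcomp Require Import all_boot.
Set Implicit Arguments. Unset Strict Implicit. Unset Printing Implicit Defensive.

Record nba (S Q : finType) := NBA {
  init  : Q -> Prop;
  final : Q -> Prop;
  delta : Q -> S -> Q -> Prop }.

Section Defs.
Variables (S Q : finType).
Implicit Types (A : nba S Q).

Definition forward_complete A := forall p a, exists r, delta A p a r.
Definition backward_complete A := forall r a, exists p, delta A p a r.

Definition accepts A (w : nat -> S) : Prop :=
  exists rho : nat -> Q,
    init A (rho 0) /\
    (forall i, delta A (rho i) (w i) (rho i.+1)) /\
    (forall n, exists k, n <= k /\ final A (rho k)).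

(* A Duplicator strategy maps the history of
   Spoiler's moves (sigma_0,p_1) ... (sigma_i,p_{i+1}) to Duplicator's answer
   q_{i+1}.  A Spoiler play is an infinite sequence of moves m i = (sigma_i, p_{i+1}). *)
Definition dup_strategy := seq (S * Q) -> Q.

Definition spoiler_pos (p0 : Q) (m : nat -> S * Q) (i : nat) : Q :=
  if i is j.+1 then (m j).2 else p0.

Definition dup_pos (q0 : Q) (st : dup_strategy) (m : nat -> S * Q) (i : nat) : Q :=
  if i is j.+1 then st (map m (iota 0 j.+1)) else q0.

Definition direct_sim A (p0 q0 : Q) : Prop :=
  exists st : dup_strategy,
    forall m : nat -> S * Q,
      (forall i, delta A (spoiler_pos p0 m i) (m i).1 (spoiler_pos p0 m i.+1)) ->
      (forall i, delta A (dup_pos q0 st m i) (m i).1 (dup_pos q0 st m i.+1)) /\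
      (forall i, final A (spoiler_pos p0 m i) -> final A (dup_pos q0 st m i)).

Definition strict_direct_sim A (p q : Q) : Prop :=
  direct_sim A p q /\ ~ direct_sim A q p.

Definition bw_di_incl A (p q : Q) : Prop :=
  forall (m : nat) (w : nat -> S) (ps : nat -> Q),
    init A (ps 0) ->
    (forall i, i < m -> delta A (ps i) (w i) (ps i.+1)) ->
    ps m = p ->
    exists qs : nat -> Q,
      init A (qs 0) /\
      (forall i, i < m -> delta A (qs i) (w i) (qs i.+1)) /\
      qs m = q /\
      (forall i, i <= m -> final A (ps i) -> final A (qs i)).

Definition trans := (Q * S * Q)%type.

Definition is_trans A (t : trans) : Prop := let: (p, a, r) := t in delta A p a r.

Definition prune A (P : trans -> trans -> Prop) : nba S Q :=
  NBA (init A) (final A)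
    (fun p a r => delta A p a r /\
       ~ (exists t' : trans, is_trans A t' /\ P (p, a, r) t')).

Definition PRel A (Rb Rf : Q -> Q -> Prop) (t t' : trans) : Prop :=
  let: (p, a, r) := t in let: (p', a', r') := t' in
  is_trans A t /\ is_trans A t' /\ a = a' /\ Rb p p' /\ Rf r r'.

End Defs.

(* Main.v *)
Require Import Defs.
From Stdlib Require Import Classical ClassicalEpsilon.
From mathcomp Require Import all_boot zify.

Set Implicit Arguments. Unset Strict Implicit. Unset Printing Implicit Defensive.

Lemma map_iota_succ (T : Type) (f : nat -> T) k n :
  map f (iota k.+1 n) = map (fun j => f j.+1) (iota k n).
Proof. by elim: n k => [|n IH] k //=; rewrite IH. Qed.

Lemma iotaS0 k : iota 0 k.+1 = rcons (iota 0 k) k.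
Proof. by rewrite -cats1 -addn1 iotaD. Qed.

Section Sim.
Variables (S Q : finType) (A : nba S Q) (fc : forward_complete A).

Definition nxt (p : Q) (a : S) : Q :=
  proj1_sig (constructive_indefinite_description _ (fc p a)).
Lemma nxtP p a : delta A p a (nxt p a).
Proof. exact: proj2_sig (constructive_indefinite_description _ (fc p a)). Qed.

Fixpoint pth (p : Q) (a : S) (i : nat) : Q :=
  if i is i.+1 then nxt (pth p a i) a else p.

Lemma sim_final (a : S) p q : direct_sim A p q -> final A p -> final A q.
Proof.
case=> st Hst Fp.
pose m := fun i => (a, pth p a i.+1).
have Hm : forall i, delta A (spoiler_pos p m i) (m i).1 (spoiler_pos p m i.+1).
  by case=> [|i] /=; apply: nxtP.
by have [_ H] := Hst m Hm; exact: (H 0 Fp).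
Qed.

Lemma sim_step p q a p' : direct_sim A p q -> delta A p a p' ->
  exists q', delta A q a q' /\ direct_sim A p' q'.
Proof.
case=> st Hst Hpp'.
pose m := fun i => (a, pth p' a i).
have Hm : forall i, delta A (spoiler_pos p m i) (m i).1 (spoiler_pos p m i.+1).
  by case=> [|i] //=; apply: nxtP.
exists (st [:: (a, p')]); split.
  by have [H _] := Hst m Hm; exact: (H 0).
exists (fun h => st ((a, p') :: h)) => m0 Hm0.
pose m' := fun i => if i is j.+1 then m0 j else (a, p').
have spm : forall i, spoiler_pos p m' i.+1 = spoiler_pos p' m0 i by case.
have dpm : forall i, dup_pos q st m' i.+1 = dup_pos (st [:: (a, p')]) (fun h => st ((a, p') :: h)) m0 i.
  case=> [|i] //=. by rewrite map_iota_succ.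
have Hm' : forall i, delta A (spoiler_pos p m' i) (m' i).1 (spoiler_pos p m' i.+1).
  case=> [|i]; first by [].
  by rewrite !spm; exact: Hm0.
have [H1 H2] := Hst m' Hm'.
split=> i.
  have := H1 i.+1; rewrite !dpm. by [].
by rewrite -dpm -spm; apply: H2.
Qed.

Definition simrel (R : Q -> Q -> Prop) :=
  (forall p q, R p q -> final A p -> final A q) /\
  (forall p q a p', R p q -> delta A p a p' -> exists q', delta A q a q' /\ R p' q').

Lemma sim_of_rel R : simrel R -> forall p q, R p q -> direct_sim A p q.
Proof.
move=> [Rf Rs] p0 q0 R0.
pose f (p q : Q) (a : S) (p' : Q) : Q :=
  epsilon (inhabits q) (fun q' => delta A q a q' /\ R p' q').
pose step (x : Q * Q) (y : S * Q) := (y.2, f x.1 x.2 y.1 y.2).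
pose st := fun h => (foldl step (p0, q0) h).2.
exists st => m Hm.
have Hf : forall k, foldl step (p0, q0) (map m (iota 0 k)) =
                     (spoiler_pos p0 m k, dup_pos q0 st m k).
  case=> [|k] //. rewrite [LHS]surjective_pairing; congr pair.
  by rewrite iotaS0 map_rcons foldl_rcons.
have dpS : forall k, dup_pos q0 st m k.+1 =
   f (spoiler_pos p0 m k) (dup_pos q0 st m k) (m k).1 (spoiler_pos p0 m k.+1).
  move=> k; rewrite {1}/dup_pos {1}/st.
  by rewrite iotaS0 map_rcons foldl_rcons Hf.
have Hinv : forall k, R (spoiler_pos p0 m k) (dup_pos q0 st m k) /\
   delta A (dup_pos q0 st m k) (m k).1 (dup_pos q0 st m k.+1).
  elim=> [|k [IH _]].
    rewrite dpS; split=> //; apply: (proj1 (epsilon_spec _ _ (Rs _ _ _ _ R0 (Hm 0)))).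
  have HR : R (spoiler_pos p0 m k.+1) (dup_pos q0 st m k.+1).
    rewrite dpS; exact: (proj2 (epsilon_spec _ _ (Rs _ _ _ _ IH (Hm k)))).
  split=> //; rewrite [dup_pos _ _ _ k.+2]dpS.
  exact: (proj1 (epsilon_spec _ _ (Rs _ _ _ _ HR (Hm k.+1)))).
split=> i; first by case: (Hinv i).
by apply: Rf; case: (Hinv i).
Qed.

Lemma sim_refl p : direct_sim A p p.
Proof.
apply: (@sim_of_rel eq) => //; split=> [p0 q0 -> //|p0 q0 a p' -> H].
by exists p'.
Qed.

Lemma sim_trans (a : S) p q r : direct_sim A p q -> direct_sim A q r -> direct_sim A p r.
Proof.
move=> H1 H2.
apply: (@sim_of_rel (fun p r => exists q, direct_sim A p q /\ direct_sim A q r)); last by exists q.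
split=> [p0 r0 [q0 [K1 K2]] F|p0 r0 b p' [q0 [K1 K2]] D].
  exact: (sim_final a K2 (sim_final a K1 F)).
have [q' [D1 K1']] := sim_step K1 D.
have [r' [D2 K2']] := sim_step K2 D1.
by exists r'; split=> //; exists q'.
Qed.

End Sim.

Definition pb (P : Prop) : bool := if excluded_middle_informative P then true else false.
Lemma pbP (P : Prop) : pb P <-> P.
Proof. by rewrite /pb; case: excluded_middle_informative. Qed.

Fixpoint wsum (B : nat) (f : nat -> nat) (n : nat) : nat :=
  if n is n.+1 then wsum B f n + f n * B ^ n else 0.

Lemma wsum_lt B f n : (forall j, f j < B) -> wsum B f n < B ^ n.
Proof.
move=> Hf; elim: n => [|n IH] /=; first by [].
rewrite expnS; have := Hf n; move: (B ^ n) IH => X; nia.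
Qed.

Lemma wsum_cmp B a b k n : (forall j, a j < B) -> a k < b k ->
  (forall j, k < j -> j < n -> a j <= b j) -> k < n -> wsum B a n < wsum B b n.
Proof.
move=> Ha Hk; elim: n => [|n IH] //= Hj Hkn.
have Hw := wsum_lt n Ha.
case: (eqVneq k n) => [Ekn|Hne].
  subst k; move: (B ^ n) Hw Hk => X Hw Hk.
  have : (a n).+1 * X <= b n * X by rewrite leq_mul2r Hk orbT.
  lia.
have Hkn' : k < n by lia.
have := IH (fun j a b => Hj j a (ltnW b)) Hkn'; have := Hj n Hkn' (ltnSn n).
move: (B ^ n) => X H1 H2.
have : a n * X <= b n * X by rewrite leq_mul2r H1 orbT.
lia.
Qed.

Lemma pigeon (Q : finType) (P : nat -> Q -> Prop) :
  (forall n, exists q, P n q) -> (forall n m q, n <= m -> P m q -> P n q) ->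
  exists q, forall n, P n q.
Proof.
move=> Hex Hmono; apply: NNPP => H.
have H' : forall q, exists n, ~ P n q.
  move=> q; apply: not_all_ex_not => Hq; apply: H; by exists q.
pose N q := epsilon (inhabits 0) (fun n => ~ P n q).
have [q Pq] := Hex (\max_(q : Q) N q).
apply: (epsilon_spec (inhabits 0) (fun n => ~ P n q) (H' q)).
exact: Hmono (leq_bigmax q) Pq.
Qed.

Section Main.
Variables (S Q : finType) (A : nba S Q) (fc : forward_complete A) (w : nat -> S).

Definition PR := PRel A (bw_di_incl A) (strict_direct_sim A).
Definition pdelta := delta (prune A PR).

Definition rank (q : Q) := #|[pred s | pb (strict_direct_sim A s q)]|.
Definition BB := #|Q|.+1.

Lemma rank_lt q : rank q < BB.
Proof. by rewrite /BB ltnS max_card. Qed.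

Lemma rank_mono q q' : direct_sim A q q' -> rank q <= rank q'.
Proof.

move=> H; apply: subset_leq_card; apply/subsetP => s; rewrite !inE => /pbP [H1 H2].
apply/pbP; split. exact (@sim_trans _ _ A fc (w 0) _ _ _ H1 H).
move=> H3; apply: H2; exact (sim_trans fc (w 0) H H3).
Qed.

Lemma rank_strict q q' : strict_direct_sim A q q' -> rank q < rank q'.
Proof.
move=> [H1 H2]; apply: proper_card; apply/properP; split.
  apply/subsetP => s; rewrite !inE => /pbP [K1 K2].
  apply/pbP; split; first exact (sim_trans fc (w 0) K1 H1).
  move=> K3; apply: K2; exact (sim_trans fc (w 0) H1 K3).
exists q; rewrite !inE; first by apply/pbP.
by apply/negP => /pbP [_ K]; apply: K; apply: sim_refl.
Qed.

Definition good (rho tau : nat -> Q) :=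
  init A (tau 0) /\ (forall i, delta A (tau i) (w i) (tau i.+1)) /\
  (forall k, final A (rho k) -> final A (tau k)).

Definition unp (tau : nat -> Q) n := forall i, i < n -> pdelta (tau i) (w i) (tau i.+1).

Definition W n (tau : nat -> Q) := wsum BB (fun j => rank (tau j)) n.+1.

Definition gch (p q : Q) (a : S) (p' : Q) : Q :=
  epsilon (inhabits q) (fun q' => delta A q a q' /\ direct_sim A p' q').

Fixpoint sim_tr (tau : nat -> Q) (s : nat) (r : Q) (k : nat) : Q :=
  if k is k.+1 then gch (tau (s + k)) (sim_tr tau s r k) (w (s + k)) (tau (s + k).+1)
  else r.

Lemma sim_trP tau s r : (forall j, delta A (tau j) (w j) (tau j.+1)) ->
  direct_sim A (tau s) r -> forall k,
  direct_sim A (tau (s + k)) (sim_tr tau s r k) /\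
  delta A (sim_tr tau s r k) (w (s + k)) (sim_tr tau s r k.+1).
Proof.
move=> Ht H0.
have Hd : forall k, direct_sim A (tau (s + k)) (sim_tr tau s r k).
  elim=> [|k IH]; first by rewrite addn0.
  have := epsilon_spec (inhabits (sim_tr tau s r k))
     (fun q' => delta A (sim_tr tau s r k) (w (s + k)) q' /\ direct_sim A (tau (s + k).+1) q')
     (sim_step fc IH (Ht (s + k))).
  by rewrite addnS => -[].
move=> k; split=> //.
exact: (proj1 (epsilon_spec _ _ (sim_step fc (Hd k) (Ht (s + k))))).
Qed.

Lemma improve rho tau i n : good rho tau -> i < n -> ~ pdelta (tau i) (w i) (tau i.+1) ->
  exists tau', good rho tau' /\ W n tau < W n tau'.
Proof.
move=> [Hi [Ht Hf]] Hin Hp.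
have [[[p' a'] r'] [Ht' HP]] : exists t', is_trans A t' /\ PR (tau i, w i, tau i.+1) t'.
  apply: NNPP => K; apply: Hp; split; [exact: Ht | exact: K].
move: HP => [_ [_ [Ea [Hbw Hst]]]]; subst a'.
have [qs [Hq0 [Hqt [Hqi Hqf]]]] := Hbw i w tau Hi (fun j _ => Ht j) erefl.
have Hsim := sim_trP Ht (proj1 Hst).
pose tau' := fun j => if j <= i then qs j else sim_tr tau i.+1 r' (j - i.+1).
exists tau'; split.
  split; first by rewrite /tau' leq0n.
  split.
    move=> j; rewrite /tau'.
    case: (ltngtP j i) => Hji.
    - by apply: Hqt.
    - 
      have -> : j.+1 - i.+1 = (j - i.+1).+1 by lia.
      have [_ K] := Hsim (j - i.+1).
      by rewrite subnKC in K.
    - by subst j; rewrite subnn Hqi.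
  move=> k Fk; rewrite /tau'.
  case: (leqP k i) => Hki; first by apply: Hqf => //; apply: Hf.
  have [K _] := Hsim (k - i.+1).
  rewrite subnKC // in K.
  exact (sim_final fc (w 0) K (Hf k Fk)).
rewrite /W; apply: (@wsum_cmp _ _ _ i.+1).
- by move=> j; apply: rank_lt.
- rewrite /tau' ltnn subnn /=; exact: rank_strict.
- move=> j Hj _; rewrite /tau' /=; have -> : (j <= i) = false by lia.
  apply: rank_mono; have [K _] := Hsim (j - i.+1).
  by rewrite subnKC ?(ltnW Hj) in K.
- by [].
Qed.


Lemma unp_mono tau n m : unp tau m -> n <= m -> unp tau n.
Proof. by move=> H Hnm i Hi; apply: H; lia. Qed.

Lemma finite_claim rho : good rho rho -> forall n, exists tau, good rho tau /\ unp tau n.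
Proof.
move=> Hr n.
suff : forall d tau, good rho tau -> BB ^ n.+1 - W n tau <= d ->
         exists tau', good rho tau' /\ unp tau' n by move=> H; exact: (H _ rho Hr (leqnn _)).
elim=> [|d IH] tau Hg Hd.
  case: (classic (unp tau n)) => Hu; first by exists tau.
  have [i Hi] : exists i, ~ (i < n -> pdelta (tau i) (w i) (tau i.+1)).
    by apply: not_all_ex_not.
  have [Hin Hp] := imply_to_and _ _ Hi.
  have [tau' [Hg' HW]] := improve Hg Hin Hp.
  have := wsum_lt n.+1 (fun j => rank_lt (tau' j)).
  rewrite -/(W n tau'); lia.
case: (classic (unp tau n)) => Hu; first by exists tau.
have [i Hi] : exists i, ~ (i < n -> pdelta (tau i) (w i) (tau i.+1)).
  by apply: not_all_ex_not.
have [Hin Hp] := imply_to_and _ _ Hi.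
have [tau' [Hg' HW]] := improve Hg Hin Hp.
apply: (IH tau' Hg').
have := wsum_lt n.+1 (fun j => rank_lt (tau' j)).
rewrite -/(W n tau'); lia.
Qed.

Definition Ext rho (sg : nat -> Q) k :=
  forall n, exists tau, good rho tau /\ unp tau n /\ forall j, j <= k -> tau j = sg j.

Definition upd (sg : nat -> Q) (k : nat) (q : Q) := fun x => if x == k then q else sg x.

Lemma ext_step rho sg k : Ext rho sg k -> exists q, Ext rho (upd sg k.+1 q) k.+1.
Proof.
move=> H.
pose P := fun n q => exists tau, good rho tau /\ unp tau n /\
      (forall j, j <= k -> tau j = sg j) /\ tau k.+1 = q.
have Hex : forall n, exists q, P n q.
  move=> n; have [tau [H1 [H2 H3]]] := H n; by exists (tau k.+1), tau.
have Hmono : forall n m q, n <= m -> P m q -> P n q.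
  move=> n m q Hnm [tau [H1 [H2 H3]]]; exists tau; split=> //; split=> //.
  exact: unp_mono H2 Hnm.
have [q Hq] := pigeon Hex Hmono.
exists q => n; have [tau [H1 [H2 [H3 H4]]]] := Hq n.
exists tau; split=> //; split=> // j Hj; rewrite /upd.
case: eqP => [->//|Hne]; apply: H3; lia.
Qed.

Definition nextq rho (sg : nat -> Q) k :=
  epsilon (inhabits (sg 0)) (fun q => Ext rho (upd sg k.+1 q) k.+1).

Fixpoint Fs rho (q0 : Q) k : nat -> Q :=
  if k is k.+1 then upd (Fs rho q0 k) k.+1 (nextq rho (Fs rho q0 k) k) else (fun _ => q0).

Lemma Fs_ext rho q0 : Ext rho (Fs rho q0 0) 0 -> forall k, Ext rho (Fs rho q0 k) k.
Proof.
move=> H0; elim=> [//|k IH] /=.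
exact: (epsilon_spec _ _ (ext_step IH)).
Qed.

Lemma Fs_stable rho q0 j k : j <= k -> Fs rho q0 k j = Fs rho q0 j j.
Proof.
elim: k => [|k IH] Hjk; first by have -> : j = 0 by lia.
case: (eqVneq j k.+1) => [->//|Hne].
by rewrite /= /upd (negbTE Hne) IH //; lia.
Qed.

Lemma completeness rho : good rho rho -> (forall n, exists k, n <= k /\ final A (rho k)) ->
  accepts (prune A PR) w.
Proof.
move=> Hr Hfair.
have Hfin := finite_claim Hr.
pose P := fun n q => exists tau, good rho tau /\ unp tau n /\ tau 0 = q.
have Hex : forall n, exists q, P n q.
  move=> n; have [tau [H1 H2]] := Hfin n; by exists (tau 0), tau.
have Hmono : forall n m q, n <= m -> P m q -> P n q.
  move=> n m q Hnm [tau [H1 [H2 H3]]]; exists tau; split=> //; split=> //.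
  exact: unp_mono H2 Hnm.
have [q0 Hq0] := pigeon Hex Hmono.
have E0 : Ext rho (Fs rho q0 0) 0.
  move=> n; have [tau [H1 [H2 H3]]] := Hq0 n; exists tau; split=> //; split=> // j Hj.
  by have -> : j = 0 by lia.
have Ek := Fs_ext E0.
exists (fun j => Fs rho q0 j j); split; [|split].
- have [tau [[Hi _] [_ H3]]] := Ek 0 0.
  by rewrite -H3.
- move=> i; have [tau [_ [H2 H3]]] := Ek i.+1 i.+1.
  by have := H2 i (ltnSn i); rewrite H3 // H3 // Fs_stable.
- move=> n; have [k [Hk Fk]] := Hfair n; exists k; split=> //.
  have [tau [[_ [_ H1]] [_ H3]]] := Ek k 0.
  by rewrite -H3 //; apply: H1.
Qed.

End Main.

Theorem theorem5p4 (S Q : finType) (A : nba S Q) :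
  forward_complete A -> backward_complete A ->
  forall w : nat -> S,
    accepts (prune A (PRel A (bw_di_incl A) (strict_direct_sim A))) w <->
    accepts A w.
Proof.
move=> fc _ w; split.
  case=> rho [H1 [H2 H3]]; exists rho; split=> //; split=> // i.
  by case: (H2 i).
case=> rho [H1 [H2 H3]].
by apply: (@completeness S Q A fc w rho) => //; split=> //; split.
Qed.
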